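(* Let $\kappa_n>0$, $\gamma>0$ and $\chi_n,\tilde\omega_n\in\mathbb{R}$ satisfy $2\kappa_n\chi_n\le\gamma$ (equivalently, $4\kappa_nS_n-Q_n^2\le 0$ where $S_n=\gamma\chi_n/2$ and $Q_n=-\gamma$ is the value of $-(\gamma+i\Omega-i\tilde\omega_n)$ at $\Omega=\tilde\omega_n$). Then there exists $\epsilon>0$ such that for every real $\Omega$ with $|\tilde\omega_n-\Omega|\le\epsilon$, the solution $F_n$ of $$\frac{\mathrm{d}}{\mathrm{d}t}F_n(t)=\kappa_nF_n(t)^2-(\gamma+i\Omega-i\tilde\omega_n)F_n(t)+\frac{\gamma\chi_n}{2},\qquad F_n(0)=0,$$ converges to a constant as $t\to\infty$; that is, the trajectory of the atom–cavity mean-value dynamics converges to a Markovian behavior even though the environmental frequency $\Omega$ is only known to lie within $\epsilon$ of $\tilde\omega_n$.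
   Context: Setting: an atom level transition with frequency $\tilde\omega_n$ coupled to a non-Markovian environment with memory kernel $\alpha(t,s)=\frac{\gamma}{2}e^{-\gamma|t-s|-i\Omega(t-s)}$, where $\Omega$ is an uncertain environmental central frequency; $\kappa_n$ is the coupling (decay) rate to the environment and $\chi_n$ a real constant. The non-Markovian decay rate enters the linear mean-value equations for $\langle\sigma_n^+\sigma_n^-\rangle,\langle\sigma_n^+a\rangle,\langle\sigma_n^-a^\dagger\rangle,\langle a^\dagger a\rangle$ through the coefficients $\kappa_nF_n(t)$, $\kappa_nF_n^*(t)$; the dynamics is said to converge to Markovian behavior when $F_n(t)$ converges to a constant as $t\to\infty$. *)

(* Defs.v *)
From Stdlib Require Import Reals.
From Coquelicot Require Import Coquelicot.
Open Scope R_scope.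

Definition riccati_rhs (kappa gamma chi omega Omega : R) (z : C) : C :=
  (RtoC kappa * z * z
   - (RtoC gamma + Ci * RtoC Omega - Ci * RtoC omega) * z
   + RtoC (gamma * chi / 2))%C.

Definition is_riccati_solution (kappa gamma chi omega Omega : R) (F : R -> C) : Prop :=
  F 0 = RtoC 0 /\
  forall t : R, 0 <= t -> is_derive F t (riccati_rhs kappa gamma chi omega Omega (F t)).

Definition converges_at_infty (F : R -> C) : Prop :=
  exists L : C, filterlim F (Rbar_locally p_infty) (locally L).

(* Main.v *)
Require Import Defs.
From Stdlib Require Import Reals Lra.
From Coquelicot Require Import Coquelicot.
Open Scope R_scope.

Lemma Cder_split (f : R -> C) (x : R) (l : C) :
  is_derive (fun t => fst (f t)) x (fst l) ->
  is_derive (fun t => snd (f t)) x (snd l) ->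
  is_derive f x l.
Proof.
  intros H1 H2.
  unfold is_derive in *.
  assert (H := filterdiff_comp'_2 (fun t => fst (f t)) (fun t => snd (f t))
     (fun u v => (u, v) : prod_NormedModule R_AbsRing R_NormedModule R_NormedModule) x _ _ (fun u v => (u,v)) H1 H2).
  simpl in H.
  assert (Hl : filterdiff
              (fun t : prod_NormedModule R_AbsRing R_NormedModule R_NormedModule => (fst t, snd t))
              (locally (fst (f x), snd (f x)))
              (fun t : prod_NormedModule R_AbsRing R_NormedModule R_NormedModule => (fst t, snd t))).
  { apply filterdiff_ext_lin with (fun t => t).
    - apply filterdiff_ext with (fun t => t).
      + intros [u v]; reflexivity.
      + apply filterdiff_linear, is_linear_id.
    - intros [u v]; reflexivity. }
  specialize (H Hl).
  eapply filterdiff_ext. 2: exact H.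
  intros y; simpl; destruct (f y); reflexivity.
Qed.

Lemma Cder_fst (f : R -> C) (x : R) (l : C) :
  is_derive f x l -> is_derive (fun t => fst (f t)) x (fst l).
Proof.
  intros H. unfold is_derive in *.
  apply (filterdiff_comp' f (fun p : prod_NormedModule R_AbsRing R_NormedModule R_NormedModule => fst p) x _ (fun p => fst p) H).
  apply filterdiff_linear, is_linear_fst.
Qed.

Lemma Cder_snd (f : R -> C) (x : R) (l : C) :
  is_derive f x l -> is_derive (fun t => snd (f t)) x (snd l).
Proof.
  intros H. unfold is_derive in *.
  apply (filterdiff_comp' f (fun p : prod_NormedModule R_AbsRing R_NormedModule R_NormedModule => snd p) x _ (fun p => snd p) H).
  apply filterdiff_linear, is_linear_snd.
Qed.

Lemma is_derive_eqR (f : R -> R) (x l lq : R) : is_derive f x l -> @eq R l lq -> is_derive f x lq.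
Proof. intros H ->; exact H. Qed.

Lemma Cder_const (c : C) x : is_derive (fun _ : R => c) x (RtoC 0).
Proof.
  apply Cder_split; simpl; (eapply is_derive_eqR; [apply is_derive_const|reflexivity]).
Qed.

Lemma Cder_plus (f g : R -> C) x lf lg :
  is_derive f x lf -> is_derive g x lg -> is_derive (fun t => (f t + g t)%C) x (lf + lg)%C.
Proof.
  intros Hf Hg. apply Cder_split; simpl.
  - apply (is_derive_plus (fun t => fst (f t)) (fun t => fst (g t))); [apply Cder_fst|apply Cder_fst]; auto.
  - apply (is_derive_plus (fun t => snd (f t)) (fun t => snd (g t))); [apply Cder_snd|apply Cder_snd]; auto.
Qed.

Lemma Cder_mult (f g : R -> C) x lf lg :
  is_derive f x lf -> is_derive g x lg ->
  is_derive (fun t => (f t * g t)%C) x (lf * g x + f x * lg)%C.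
Proof.
  intros Hf Hg.
  pose proof (Cder_fst _ _ _ Hf) as Hf1. pose proof (Cder_snd _ _ _ Hf) as Hf2.
  pose proof (Cder_fst _ _ _ Hg) as Hg1. pose proof (Cder_snd _ _ _ Hg) as Hg2.
  assert (M : forall (u v : R -> R) du dv, is_derive u x du -> is_derive v x dv ->
            is_derive (fun t => u t * v t) x (du * v x + u x * dv)).
  { intros u v du dv Hu Hv. eapply is_derive_eqR.
    exact (is_derive_mult u v x du dv Hu Hv Rmult_comm).
    unfold plus, mult; simpl. ring. }
  apply Cder_split; simpl.
  - eapply is_derive_eqR.
    apply (is_derive_minus (fun t => fst (f t) * fst (g t)) (fun t => snd (f t) * snd (g t))); [apply (M _ _ _ _ Hf1 Hg1) | apply (M _ _ _ _ Hf2 Hg2)].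
    unfold minus, plus, opp; simpl. change (AbsRing.sort R_AbsRing) with R in *. ring.
  - eapply is_derive_eqR.
    apply (is_derive_plus (fun t => fst (f t) * snd (g t)) (fun t => snd (f t) * fst (g t))); [apply (M _ _ _ _ Hf1 Hg2) | apply (M _ _ _ _ Hf2 Hg1)].
    unfold plus; simpl. change (AbsRing.sort R_AbsRing) with R in *. ring.
Qed.

Lemma Cder_inv (g : R -> C) x lg :
  is_derive g x lg -> g x <> RtoC 0 ->
  is_derive (fun t => (/ g t)%C) x (- lg / (g x * g x))%C.
Proof.
  intros Hg Hnz.
  pose proof (Cder_fst _ _ _ Hg) as Hg1. pose proof (Cder_snd _ _ _ Hg) as Hg2.
  assert (Hq : fst (g x) ^ 2 + snd (g x) ^ 2 <> 0).
  { intro H. apply Hnz. destruct (g x) as [u v]; simpl in *.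
    assert (u = 0) by nra. assert (v = 0) by nra. subst; reflexivity. }
  assert (Hd : is_derive (fun t => fst (g t) ^ 2 + snd (g t) ^ 2) x
                 (2 * fst (g x) * fst lg + 2 * snd (g x) * snd lg)).
  { eapply is_derive_eqR.
    apply (is_derive_plus (fun t => fst (g t) ^ 2) (fun t => snd (g t) ^ 2));
      [apply (is_derive_pow (fun t => _ (g t)) 2 x _ Hg1) | apply (is_derive_pow (fun t => _ (g t)) 2 x _ Hg2)].
    unfold plus; simpl. change (AbsRing.sort R_AbsRing) with R in *. ring. }
  assert (Hopp : is_derive (fun t => - snd (g t)) x (- snd lg)).
  { apply (is_derive_opp (fun t => snd (g t))); auto. }
  apply Cder_split; unfold Cinv; cbn [fst snd].
  - eapply is_derive_eqR.
    apply (is_derive_div _ _ x _ _ Hg1 Hd Hq).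
    revert Hq. destruct (g x) as [u v]; destruct lg as [p q]; cbn -[pow]. intros Hq.
    field. repeat split; try exact Hq; intro H0; apply Hq;
    assert (Hz : (u ^ 2 + v ^ 2) * (u ^ 2 + v ^ 2) = 0) by (rewrite <- H0; ring);
    apply Rmult_integral in Hz; destruct Hz; auto.
  - eapply is_derive_eqR.
    apply (is_derive_div _ _ x _ _ Hopp Hd Hq).
    revert Hq. destruct (g x) as [u v]; destruct lg as [p q]; cbn -[pow]. intros Hq.
    field. repeat split; try exact Hq; intro H0; apply Hq;
    assert (Hz : (u ^ 2 + v ^ 2) * (u ^ 2 + v ^ 2) = 0) by (rewrite <- H0; ring);
    apply Rmult_integral in Hz; destruct Hz; auto.
Qed.

Definition Cexp2 (mr mi t : R) : C := (exp (mr * t) * cos (mi * t), exp (mr * t) * sin (mi * t)).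

Lemma Cder_exp mr mi x : is_derive (Cexp2 mr mi) x ((mr, mi) * Cexp2 mr mi x)%C.
Proof.
  apply Cder_split; unfold Cexp2; simpl.
  - auto_derive; auto. ring.
  - auto_derive; auto. ring.
Qed.

Lemma Rder_mult (u v : R -> R) x du dv : is_derive u x du -> is_derive v x dv ->
  is_derive (fun t => u t * v t) x (du * v x + u x * dv).
Proof.
  intros Hu Hv. eapply is_derive_eqR.
  exact (is_derive_mult u v x du dv Hu Hv Rmult_comm).
  unfold plus, mult; simpl. ring.
Qed.

Lemma der_cont (f : R -> R) x l : is_derive f x l -> continuity_pt f x.
Proof.
  intros H. apply continuity_pt_filterlim. apply (ex_derive_continuous (K:=R_AbsRing) (V:=R_NormedModule) f x). exists l; exact H.
Qed.

Lemma lin_uniq (P c : R -> C) :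
  P 0 = RtoC 0 ->
  (forall t, 0 <= t -> is_derive P t (c t * P t)%C) ->
  (forall t, 0 <= t -> continuity_pt (fun u => fst (c u)) t) ->
  forall T, 0 <= T -> P T = RtoC 0.
Proof.
  intros H0 HP Hc T HT.
  destruct (Req_dec T 0) as [->|HT0]; [exact H0|].
  assert (HTp : 0 < T) by lra.
  destruct (continuity_ab_maj (fun u => fst (c u)) 0 T) as [Mx [HM _]]; [lra| intros; apply Hc; lra |].
  set (M := fst (c Mx)).
  set (g := fun u => fst (P u) * fst (P u) + snd (P u) * snd (P u)).
  set (h := fun u => g u * exp (- (2 * M) * u)).
  set (dh := fun u => 2 * (fst (c u) - M) * g u * exp (- (2 * M) * u)).
  assert (Hder : forall x, 0 <= x -> is_derive h x (dh x)).
  { intros x Hx.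
    pose proof (HP x Hx) as Hd.
    pose proof (Cder_fst _ _ _ Hd) as H1. pose proof (Cder_snd _ _ _ Hd) as H2.
    assert (Hg : is_derive g x (2 * fst (c x) * g x)).
    { eapply is_derive_eqR.
      apply (is_derive_plus (fun u => fst (P u) * fst (P u)) (fun u => snd (P u) * snd (P u)));
        [apply (Rder_mult _ _ _ _ _ H1 H1) | apply (Rder_mult _ _ _ _ _ H2 H2)].
      unfold plus, g; simpl. change (AbsRing.sort R_AbsRing) with R in *. ring. }
    assert (He : is_derive (fun u => exp (- (2 * M) * u)) x (- (2 * M) * exp (- (2 * M) * x))).
    { auto_derive; auto. ring. }
    eapply is_derive_eqR. apply (Rder_mult _ _ _ _ _ Hg He).
    unfold dh. change (AbsRing.sort R_AbsRing) with R in *. ring. }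
  destruct (MVT_gen h 0 T dh) as [xi [Hxi Heq]].
  - rewrite Rmin_left, Rmax_right by lra. intros x Hx. apply Hder; lra.
  - rewrite Rmin_left, Rmax_right by lra. intros x Hx. apply (der_cont _ _ (dh x)). apply Hder; lra.
  - rewrite Rmin_left, Rmax_right in Hxi by lra.
    assert (Hh0 : h 0 = 0). { unfold h, g. rewrite H0. simpl. ring. }
    assert (Hdh : dh xi <= 0).
    { unfold dh. assert (fst (c xi) <= M) by (apply HM; lra).
      assert (0 <= g xi) by (unfold g; nra).
      pose proof (exp_pos (- (2 * M) * xi)). 
      assert (0 <= (M - fst (c xi)) * g xi * exp (- (2 * M) * xi)).
      { apply Rmult_le_pos; [apply Rmult_le_pos|]; lra. }
      nra. }
    assert (HhT : h T <= 0) by nra.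
    assert (HgT : g T <= 0).
    { unfold h in HhT. pose proof (exp_pos (- (2 * M) * T)). nra. }
    unfold g in HgT.
    assert (fst (P T) = 0) by nra. assert (snd (P T) = 0) by nra.
    destruct (P T) as [u v]; simpl in *; subst; reflexivity.
Qed.

Notation c2 := (RtoC 1 + RtoC 1)%C.

Lemma c2_neq0 : c2 <> RtoC 0.
Proof. intro H. injection H. lra. Qed.

Lemma Cder_eq (f : R -> C) x (l l' : C) : is_derive f x l -> @eq C l l' -> is_derive f x l'.
Proof. intros H <-; exact H. Qed.

Lemma Rabs_fst_le (z : C) : Rabs (fst z) <= Cmod z.
Proof.
  unfold Cmod. rewrite <- sqrt_Rsqr_abs. apply sqrt_le_1_alt. unfold Rsqr. simpl. nra.
Qed.
Lemma Rabs_snd_le (z : C) : Rabs (snd z) <= Cmod z.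
Proof.
  unfold Cmod. rewrite <- sqrt_Rsqr_abs. apply sqrt_le_1_alt. unfold Rsqr. simpl. nra.
Qed.

Lemma ball_C (r w : C) (eps : R) : Cmod w < eps -> ball r eps (r + w)%C.
Proof.
  intros H. destruct r as [r1 r2]; destruct w as [w1 w2].
  pose proof (Rabs_fst_le (w1, w2)). pose proof (Rabs_snd_le (w1, w2)). simpl in *.
  split; unfold ball; simpl; unfold AbsRing_ball, abs, minus, plus, opp; simpl.
  - replace (r1 + w1 + - r1) with w1 by ring. lra.
  - replace (r2 + w2 + - r2) with w2 by ring. lra.
Qed.

Lemma core (k : R) (a s mu : C) (Phi : R -> C) :
  k <> 0 ->
  (mu * mu = a * a - c2 * c2 * RtoC k * s)%C ->
  Phi 0 = RtoC 0 ->
  (forall t, 0 <= t -> is_derive Phi t (RtoC 1 + mu * Phi t)%C) ->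
  (forall t, 0 <= t -> (c2 + (a + mu) * Phi t)%C <> RtoC 0) ->
  (forall M, exists T, forall t, T <= t -> M <= Cmod (c2 + (a + mu) * Phi t)%C) ->
  (exists F : R -> C, F 0 = RtoC 0 /\
     forall t, 0 <= t -> is_derive F t (RtoC k * F t * F t - a * F t + s)%C) /\
  (forall F : R -> C, F 0 = RtoC 0 ->
     (forall t, 0 <= t -> is_derive F t (RtoC k * F t * F t - a * F t + s)%C) ->
     exists L : C, filterlim F (Rbar_locally p_infty) (locally L)).
Proof.
  intros Hk Hmu H0 HPhi HGnz HGinf.
  assert (HK : RtoC k <> RtoC 0). { intro H; injection H; auto. }
  pose proof c2_neq0 as H2.
  assert (Hs : s = ((a * a - mu * mu) / (c2 * c2 * RtoC k))%C).
  { rewrite Hmu. field; repeat split; auto. }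
  set (G := fun t => (c2 + (a + mu) * Phi t)%C).
  set (r := ((a - mu) / (c2 * RtoC k))%C).
  set (cc := (- (a - mu) / RtoC k)%C).
  assert (HG : forall t, 0 <= t -> is_derive G t ((a + mu) * (RtoC 1 + mu * Phi t))%C).
  { intros t Ht. eapply Cder_eq.
    apply (Cder_plus (fun _ => c2) (fun t => (a + mu) * Phi t)%C); [apply Cder_const|].
    apply (Cder_mult (fun _ => (a + mu)%C) Phi); [apply Cder_const | apply HPhi; auto].
    field. }
  split.
  - exists (fun t => (r + cc * / G t)%C). split.
    + unfold G. rewrite H0. unfold r, cc. field; repeat split; auto.
    + intros t Ht. eapply Cder_eq.
      apply (Cder_plus (fun _ => r) (fun t => cc * / G t)%C); [apply Cder_const|].
      apply (Cder_mult (fun _ => cc) (fun t => / G t)%C); [apply Cder_const|].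
      apply Cder_inv; [apply HG; auto | apply HGnz; auto].
      rewrite Hs. pose proof (HGnz t Ht) as Hg. fold (G t) in Hg. unfold G in *. unfold r, cc.
      field; repeat split; auto; intro HH; apply Hg; rewrite <- HH; ring.
  - intros F HF0 HF.
    set (P := fun t => (RtoC k * G t * (F t - r) + (a - mu))%C).
    set (c := fun t => (RtoC k * (F t - r))%C).
    assert (HP0 : P 0 = RtoC 0).
    { unfold P, G. rewrite H0, HF0. unfold r. field; repeat split; auto. }
    assert (HPd : forall t, 0 <= t -> is_derive P t (c t * P t)%C).
    { intros t Ht. eapply Cder_eq.
      apply (Cder_plus (fun t => RtoC k * G t * (F t - r))%C (fun _ => (a - mu)%C)); [|apply Cder_const].
      apply (Cder_mult (fun t => RtoC k * G t)%C (fun t => F t - r)%C).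
      apply (Cder_mult (fun _ => RtoC k) G); [apply Cder_const | apply HG; auto].
      eapply Cder_eq. apply (Cder_plus F (fun _ => (- r)%C)); [apply HF; auto | apply Cder_const].
      reflexivity.
      unfold c, P, G. rewrite Hs. unfold r. field; repeat split; auto. }
    assert (Hcc : forall t, 0 <= t -> continuity_pt (fun u => fst (c u)) t).
    { intros t Ht. eapply der_cont. apply Cder_fst.
      apply (Cder_mult (fun _ => RtoC k) (fun t => F t - r)%C); [apply Cder_const|].
      eapply Cder_eq. apply (Cder_plus F (fun _ => (- r)%C)); [apply HF; auto | apply Cder_const].
      reflexivity. }
    pose proof (lin_uniq P c HP0 HPd Hcc) as HPz.
    exists r.
    apply filterlim_ext_loc with (fun t => (r + cc * / G t)%C).
    { exists 0. intros t Ht. pose proof (HPz t (Rlt_le _ _ Ht)) as Hz.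
      pose proof (HGnz t (Rlt_le _ _ Ht)) as Hg. fold (G t) in Hg.
      unfold P in Hz. unfold cc.
      assert (E1 : (RtoC k * G t * (F t - r))%C = (- (a - mu))%C).
      { transitivity ((RtoC k * G t * (F t - r) + (a - mu)) - (a - mu))%C; [ring|].
        rewrite Hz. ring. }
      replace (F t) with (r + (RtoC k * G t * (F t - r)) / (RtoC k * G t))%C.
      - rewrite E1. field. auto.
      - field. auto. }
    apply filterlim_locally. intros eps.
    destruct (HGinf (Cmod cc / eps + 1)) as [T HT].
    exists (Rmax T 0). intros t Ht.
    assert (HtT : T <= t) by (pose proof (Rmax_l T 0); lra).
    assert (Ht0 : 0 <= t) by (pose proof (Rmax_r T 0); lra).
    apply ball_C.
    pose proof (HGnz t Ht0) as Hg. fold (G t) in Hg.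
    pose proof (HT t HtT) as Hm. fold (G t) in Hm.
    rewrite Cmod_mult, Cmod_inv by exact Hg.
    set (m := Cmod (G t)) in *.
    pose proof (cond_pos eps) as Heps.
    pose proof (Cmod_ge_0 cc) as Hc0.
    assert (Hce : eps * (Cmod cc / eps) = Cmod cc) by (field; lra).
    assert (Hm0 : 0 < m) by (assert (0 <= Cmod cc / eps) by (apply Rdiv_le_0_compat; lra); lra).
    assert (Hlt : Cmod cc < eps * m) by nra.
    apply (Rmult_lt_reg_r m); auto.
    rewrite Rmult_assoc, Rinv_l by lra. lra.
Qed.

Definition concl (k : R) (a s : C) : Prop :=
  (exists F : R -> C, F 0 = RtoC 0 /\
     forall t, 0 <= t -> is_derive F t (RtoC k * F t * F t - a * F t + s)%C) /\
  (forall F : R -> C, F 0 = RtoC 0 ->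
     (forall t, 0 <= t -> is_derive F t (RtoC k * F t * F t - a * F t + s)%C) ->
     exists L : C, filterlim F (Rbar_locally p_infty) (locally L)).

Lemma caseA (k g chi : R) : 0 < k -> 0 < g -> g = 2 * k * chi ->
  concl k (g, 0) (RtoC (g * chi / 2)).
Proof.
  intros Hk Hg Heq.
  apply (core k (g, 0) (RtoC (g * chi / 2)) (RtoC 0) (fun t => RtoC t)).
  - lra.
  - apply injective_projections; simpl; nra.
  - reflexivity.
  - intros t Ht. apply Cder_split; simpl.
    + assert (H1 : is_derive (fun u : R => u) t 1) by exact (is_derive_id (K:=R_AbsRing) t).
      eapply is_derive_eqR. apply H1. ring.
    + assert (H1 : is_derive (fun u : R => 0) t 0) by exact (is_derive_const (K:=R_AbsRing) (V:=R_NormedModule) 0 t).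
      eapply is_derive_eqR. apply H1. ring.
  - intros t Ht H. apply (f_equal fst) in H. simpl in H. nra.
  - intros M. exists (M / g). intros t Ht.
    eapply Rle_trans; [|apply Rabs_fst_le]. simpl.
    assert (g * (M / g) = M) by (field; lra).
    assert (g * (M / g) <= g * t) by (apply Rmult_le_compat_l; lra).
    eapply Rle_trans; [|apply Rle_abs]. nra.
Qed.

Lemma Cmod_exp2 mr mi t : Cmod (Cexp2 mr mi t) = exp (mr * t).
Proof.
  unfold Cmod, Cexp2; simpl.
  pose proof (sin2_cos2 (mi * t)) as Hsc. unfold Rsqr in Hsc.
  replace (exp (mr * t) * cos (mi * t) * (exp (mr * t) * cos (mi * t) * 1) +
           exp (mr * t) * sin (mi * t) * (exp (mr * t) * sin (mi * t) * 1))
    with (exp (mr * t) ^ 2).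
  - apply sqrt_pow2. left; apply exp_pos.
  - transitivity (exp (mr * t) ^ 2 * (sin (mi * t) * sin (mi * t) + cos (mi * t) * cos (mi * t))).
    + rewrite Hsc; ring.
    + ring.
Qed.

Lemma caseB (k g chi d mr mi : R) : 0 < k -> 0 < g -> 0 < mr ->
  mr * mr - mi * mi = g * g - d * d - 2 * k * g * chi -> mr * mi = g * d ->
  concl k (g, d) (RtoC (g * chi / 2)).
Proof.
  intros Hk Hg Hmr Hre Him.
  set (mu := (mr, mi) : C).
  assert (Hmunz : mu <> RtoC 0). { intro H. apply (f_equal fst) in H. simpl in H. lra. }
  set (Phi := fun t => ((Cexp2 mr mi t - RtoC 1) * / mu)%C).
  set (N := ((g, d) + mu)%C). set (Mn := ((g, d) - mu)%C).
  assert (HNM : Cmod Mn < Cmod N).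
  { unfold Cmod, N, Mn, mu; simpl. apply sqrt_lt_1_alt. rewrite !Rmult_1_r. split; [apply Rplus_le_le_0_compat; apply Rle_0_sqr|].
    assert (0 <= mr * (d * mi)) by nra.
    assert (0 <= d * mi) by nra. nra. }
  assert (Hmod0 : 0 < Cmod mu) by (apply Cmod_gt_0; exact Hmunz).
  assert (Hkey : forall t, (Cmod N - Cmod Mn) + Cmod N * mr * t <= Cmod mu * Cmod (c2 + ((g, d) + mu) * Phi t)%C).
  { intros t. rewrite <- Cmod_mult.
    assert (Heq : (mu * (c2 + ((g, d) + mu) * Phi t))%C = (N * Cexp2 mr mi t - Mn)%C).
    { unfold Phi, N, Mn. field. exact Hmunz. }
    rewrite Heq.
    pose proof (Cmod_triangle (N * Cexp2 mr mi t - Mn)%C Mn) as Htr.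
    replace ((N * Cexp2 mr mi t - Mn) + Mn)%C with (N * Cexp2 mr mi t)%C in Htr by ring.
    rewrite Cmod_mult, Cmod_exp2 in Htr.
    pose proof (exp_ineq1_le (mr * t)) as He.
    pose proof (Cmod_ge_0 N) as HN0.
    assert (Cmod N * (1 + mr * t) <= Cmod N * exp (mr * t)) by (apply Rmult_le_compat_l; lra).
    nra. }
  apply (core k (g, d) (RtoC (g * chi / 2)) mu Phi).
  - lra.
  - unfold mu. apply injective_projections; simpl; nra.
  - unfold Phi, Cexp2. rewrite !Rmult_0_r, exp_0, cos_0, sin_0.
    replace (1 * 1, 1 * 0) with (RtoC 1) by (apply injective_projections; simpl; ring).
    ring.
  - intros t Ht. eapply Cder_eq.
    apply (Cder_mult (fun t => Cexp2 mr mi t - RtoC 1)%C (fun _ => / mu)%C); [|apply Cder_const].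
    apply (Cder_plus (Cexp2 mr mi) (fun _ => - RtoC 1)%C); [apply Cder_exp | apply Cder_const].
    unfold Phi. fold mu. field. exact Hmunz.
  - intros t Ht H. specialize (Hkey t). rewrite H, Cmod_0 in Hkey.
    pose proof (Cmod_ge_0 N). assert (0 <= Cmod N * mr * t).
    { apply Rmult_le_pos; [apply Rmult_le_pos|]; lra. }
    lra.
  - intros M. 
    assert (HN : 0 < Cmod N) by (pose proof (Cmod_ge_0 Mn); lra).
    exists (M * Cmod mu / (Cmod N * mr)). intros t Ht.
    specialize (Hkey t).
    assert (HNmr : 0 < Cmod N * mr) by (apply Rmult_lt_0_compat; lra).
    assert (H1 : Cmod N * mr * (M * Cmod mu / (Cmod N * mr)) = M * Cmod mu) by (field; lra).
    assert (H2 : Cmod N * mr * (M * Cmod mu / (Cmod N * mr)) <= Cmod N * mr * t)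
      by (apply Rmult_le_compat_l; lra).
    nra.
Qed.

Lemma mu_ex (g d Dr : R) : 0 < g -> (d = 0 -> 0 < Dr) ->
  exists mr mi, 0 < mr /\ mr * mr - mi * mi = Dr /\ mr * mi = g * d.
Proof.
  intros Hg Hd. destruct (Req_dec d 0) as [H0|H0].
  - specialize (Hd H0). subst d. exists (sqrt Dr), 0. split; [apply sqrt_lt_R0; lra|].
    split; [rewrite sqrt_sqrt; lra | ring].
  - set (m := sqrt (Dr * Dr + (2 * g * d) * (2 * g * d))).
    assert (Hm2 : m * m = Dr * Dr + (2 * g * d) * (2 * g * d)) by (apply sqrt_sqrt; nra).
    assert (Hm0 : 0 <= m) by apply sqrt_pos.
    assert (Hgd : 0 < (2 * g * d) * (2 * g * d)).
    { assert (2 * g * d <> 0). { intro H. apply Rmult_integral in H. destruct H; [lra|auto]. }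
      nra. }
    assert (Hmp : 0 < m + Dr) by nra.
    set (mr := sqrt ((m + Dr) / 2)).
    assert (HX : mr * mr = (m + Dr) / 2) by (apply sqrt_sqrt; lra).
    assert (Hmr : 0 < mr) by (apply sqrt_lt_R0; lra).
    exists mr, (g * d / mr). split; [exact Hmr|]. split; [| field; lra].
    replace (mr * mr - g * d / mr * (g * d / mr)) with ((mr * mr * (mr * mr) - g * d * (g * d)) / (mr * mr))
      by (field; lra).
    rewrite HX. apply (Rmult_eq_reg_r ((m + Dr) / 2)); [|lra].
    unfold Rdiv at 1. rewrite Rmult_assoc, Rinv_l by lra. nra.
Qed.

Theorem theorem2 (kappa gamma chi omega : R) :
  0 < kappa -> 0 < gamma -> 2 * kappa * chi <= gamma ->
  exists eps : R, 0 < eps /\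
    forall Omega : R, Rabs (omega - Omega) <= eps ->
      (exists F : R -> C, is_riccati_solution kappa gamma chi omega Omega F) /\
      (forall F : R -> C, is_riccati_solution kappa gamma chi omega Omega F ->
         converges_at_infty F).
Proof.
  intros Hk Hg Hc. exists 1. split; [lra|]. intros Om _.
  assert (Ha : (RtoC gamma + Ci * RtoC Om - Ci * RtoC omega)%C = (gamma, Om - omega))
    by (apply injective_projections; simpl; ring).
  assert (Hconc : concl kappa (gamma, Om - omega) (RtoC (gamma * chi / 2))).
  { set (Dr := gamma * gamma - (Om - omega) * (Om - omega) - 2 * kappa * gamma * chi).
    destruct (Req_dec (Om - omega) 0) as [Hd|Hd].
    - destruct (Req_dec gamma (2 * kappa * chi)) as [Hgk|Hgk].
      + rewrite Hd. apply caseA; auto.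
      + assert (HD : Om - omega = 0 -> 0 < Dr).
        { intros _. unfold Dr. rewrite Hd. assert (0 < gamma - 2 * kappa * chi) by lra. nra. }
        destruct (mu_ex gamma (Om - omega) Dr Hg HD) as [mr [mi [H1 [H2 H3]]]].
        apply (caseB kappa gamma chi (Om - omega) mr mi); auto.
    - assert (HD : Om - omega = 0 -> 0 < Dr) by (intros H; contradiction).
      destruct (mu_ex gamma (Om - omega) Dr Hg HD) as [mr [mi [H1 [H2 H3]]]].
      apply (caseB kappa gamma chi (Om - omega) mr mi); auto. }
  destruct Hconc as [Hex Hcv]. split.
  - destruct Hex as [F [HF0 HF]]. exists F. unfold is_riccati_solution, riccati_rhs.
    rewrite Ha. split; auto.
  - intros F [HF0 HF]. unfold converges_at_infty. apply (Hcv F HF0).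
    intros t Ht. specialize (HF t Ht). unfold riccati_rhs in HF. rewrite Ha in HF. exact HF.
Qed.
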